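(* Let $\mathbb{I}=\operatorname{diag}(I_1,I_2,I_3)$ with $I_i>0$, let $m>0$, $M>0$, $\bar m=m+M$, $l>0$, $\mathrm{g}>0$, and let $\boldsymbol\chi\in\mathbb{R}^3$ be a unit vector. Consider the reduced Lagrangian $$\ell(\boldsymbol\Omega,\mathbf v,\boldsymbol\Gamma,h)=K(\boldsymbol\Omega,\mathbf v)-\mathrm{g}\,ml\,\boldsymbol\chi\cdot\boldsymbol\Gamma-\mathrm{g}\,\bar m\,h,\qquad K(\boldsymbol\Omega,\mathbf v)=\tfrac12\mathbb{G}_{\alpha\beta}\Omega^\alpha\Omega^\beta+\mathbb{G}_{\alpha b}\Omega^\alpha v^b+\tfrac12\mathbb{G}_{ab}v^av^b,$$ with $(\boldsymbol\Omega,\mathbf v,\boldsymbol\Gamma,h)\in\mathbb{R}^3\times\mathbb{R}^3\times\mathbb{R}^3\times\mathbb{R}$, where the symmetric $6\times6$ matrix $\mathbb{G}$ has blocks $(\mathbb{G}_{\alpha\beta})=\mathbb{I}$, $(\mathbb{G}_{\alpha b})=ml\hat{\boldsymbol\chi}$, $(\mathbb{G}_{a\beta})=-ml\hat{\boldsymbol\chi}$, $(\mathbb{G}_{ab})=\bar m I_{3\times3}$. Let $\rho=(\rho_{ab})$, $\sigma=(\sigma_{ab})$ be invertible constant $3\times 3$ matrices and $\tau=(\tau^a_\alpha)$ a constant $3\times3$ matrix satisfying the matching conditions $$(\mathrm{MC}_1)\ \ \rho_{ab}-\mathbb{G}_{ab}=k\,\delta_{ab}\ \text{for some } k\in\mathbb{R};\qquad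 (\mathrm{MC}_2)\ \ \tau^a_\alpha=(\rho^{ab}-\mathbb{G}^{ab})\mathbb{G}_{b\alpha};\qquad (\mathrm{MC}_3)\ \ \sigma^{ab}=\mathbb{G}^{ab}-\rho^{ab},$$ where upper indices denote entries of inverse matrices (so $(\mathbb{G}^{ab})=(\mathbb{G}_{ab})^{-1}$, $(\rho^{ab})=(\rho_{ab})^{-1}$, $(\sigma^{ab})=(\sigma_{ab})^{-1}$; in particular $\mathbb{G}^{ab}-\rho^{ab}$ is assumed invertible). Define the controlled Lagrangian $$\ell_{\tau,\sigma,\rho}(\boldsymbol\Omega,\mathbf v,\boldsymbol\Gamma)=K_{\tau,\sigma,\rho}(\boldsymbol\Omega,\mathbf v)-\mathrm{g}\,ml\,\boldsymbol\chi\cdot\boldsymbol\Gamma,$$ $$K_{\tau,\sigma,\rho}=K(\Omega^\alpha,\,v^a+\tau^a_\alpha\Omega^\alpha)+\tfrac12\sigma_{ab}\tau^a_\alpha\tau^b_\beta\Omega^\alpha\Omega^\beta+\tfrac12(\rho_{ab}-\mathbb{G}_{ab})\big(v^a+(\mathbb{G}^{ac}\mathbb{G}_{c\alpha}+\tau^a_\alpha)\Omega^\alpha\big)\big(v^b+(\mathbb{G}^{bd}\mathbb{G}_{d\beta}+\tau^b_\beta)\Omega^\beta\big).$$ Consider the controlled equations $$\frac{d}{dt}\frac{\delta\ell}{\delta\boldsymbol\Omega}=\frac{\delta\ell}{\delta\boldsymbol\Omega}\times\boldsymbol\Omega+\frac{\delta\ell}{\delta\mathbf v}\times\mathbf v+\frac{\delta\ell}{\delta\boldsymbol\Gamma}\times\boldsymbol\Gamma,\qquad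 \frac{d}{dt}\frac{\delta\ell}{\delta\mathbf v}=\frac{\delta\ell}{\delta\mathbf v}\times\boldsymbol\Omega+\frac{\delta\ell}{\delta h}\boldsymbol\Gamma+\mathbf u,\qquad \dot{\boldsymbol\Gamma}=\boldsymbol\Gamma\times\boldsymbol\Omega,$$ with the control $$\mathbf u=\frac{d}{dt}\Big(\frac{\delta\ell}{\delta\mathbf v}-\frac{\delta\ell_{\tau,\sigma,\rho}}{\delta\mathbf v}\Big)-\Big(\frac{\delta\ell}{\delta\mathbf v}-\frac{\delta\ell_{\tau,\sigma,\rho}}{\delta\mathbf v}\Big)\times\boldsymbol\Omega+\bar m\,\mathrm{g}\,\boldsymbol\Gamma,$$ and the free equations for the controlled Lagrangian $$\frac{d}{dt}\frac{\delta\ell_{\tau,\sigma,\rho}}{\delta\boldsymbol\Omega}=\frac{\delta\ell_{\tau,\sigma,\rho}}{\delta\boldsymbol\Omega}\times\boldsymbol\Omega+\frac{\delta\ell_{\tau,\sigma,\rho}}{\delta\mathbf v}\times\mathbf v+\frac{\delta\ell_{\tau,\sigma,\rho}}{\delta\boldsymbol\Gamma}\times\boldsymbol\Gamma,\qquad \frac{d}{dt}\frac{\delta\ell_{\tau,\sigma,\rho}}{\delta\mathbf v}=\frac{\delta\ell_{\tau,\sigma,\rho}}{\delta\mathbf v}\times\boldsymbol\Omega,\qquad\dot{\boldsymbol\Gamma}=\boldsymbol\Gamma\times\boldsymbol\Omega.$$ Then a $C^1$ curve $t\mapsto(\boldsymbol\Omega(t),\mathbf v(t),\boldsymbol\Gamma(t))$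 solves the controlled equations with this control if and only if it solves the free equations for $\ell_{\tau,\sigma,\rho}$. (Under $(\mathrm{MC}_1)$, one has $\frac{\delta\ell_{\tau,\sigma,\rho}}{\delta\mathbf v}-\frac{\delta\ell}{\delta\mathbf v}=k\mathbf v$ with $k=\rho_{ab}-\mathbb G_{ab}$ scalar, and $\rho_{ab}=\rho\,\delta_{ab}$ for a scalar $\rho$.)
   Context: Indices: Greek indices $\alpha,\beta\in\{1,2,3\}$ refer to components of $\boldsymbol\Omega$, Latin indices $a,b,c,d\in\{1,2,3\}$ to components of $\mathbf v$; repeated indices are summed. The hat map $\hat{\ }:\mathbb{R}^3\to\mathfrak{so}(3)$ sends $\mathbf x$ to the skew-symmetric matrix with $\hat{\mathbf x}\mathbf y=\mathbf x\times\mathbf y$. For a function $f$ on a vector space, $\delta f/\delta x$ denotes its gradient (partial derivative with respect to the indicated variable, identified with a vector via the dot product); e.g. $\delta\ell/\delta\boldsymbol\Gamma=-\mathrm{g}ml\boldsymbol\chi$ and $\delta\ell/\delta h=-\bar m\mathrm{g}$. Here $\boldsymbol\Omega$ is the body angular velocity of a top on a movable base, $\mathbf v$ the base velocity in the body frame, $\boldsymbol\Gamma$ the vertical upward direction in the body frame and $h$ the base height. *)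

(* Defs.v *)
From Stdlib Require Import Reals.
Open Scope R_scope.

Inductive I3 : Set := i1 | i2 | i3.
Definition vec := I3 -> R.
Definition mat := I3 -> I3 -> R.

Definition eqI3 (a b : I3) : bool :=
  match a, b with i1, i1 | i2, i2 | i3, i3 => true | _, _ => false end.

Definition sum3 (f : I3 -> R) : R := f i1 + f i2 + f i3.
Definition delta (a b : I3) : R := if eqI3 a b then 1 else 0.
Definition dot (x y : vec) : R := sum3 (fun a => x a * y a).
Definition mv (A : mat) (x : vec) : vec := fun a => sum3 (fun b => A a b * x b).
Definition mm (A B : mat) : mat := fun a b => sum3 (fun c => A a c * B c b).
Definition bil (A : mat) (x y : vec) : R :=
  sum3 (fun a => sum3 (fun b => A a b * x a * y b)).

Definition cross (x y : vec) : vec := fun a =>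
  match a with
  | i1 => x i2 * y i3 - x i3 * y i2
  | i2 => x i3 * y i1 - x i1 * y i3
  | i3 => x i1 * y i2 - x i2 * y i1
  end.

(* standard basis and hat map: hat x * y = x × y *)
Definition ebas (j : I3) : vec := fun a => delta a j.
Definition hat (x : vec) : mat := fun a b => cross x (ebas b) a.

Definition upd (x : vec) (a : I3) (s : R) : vec :=
  fun b => if eqI3 b a then s else x b.

Definition GOO (In : vec) : mat := fun a b => if eqI3 a b then In a else 0.
Definition GOv (m l : R) (chi : vec) : mat := fun a b => m * l * hat chi a b.
Definition GvO (m l : R) (chi : vec) : mat := fun a b => - (m * l * hat chi a b).
Definition Gvv (m M : R) : mat := fun a b => (m + M) * delta a b.

Definition Kin (In : vec) (m M l : R) (chi : vec) (Om v : vec) : R :=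
  / 2 * bil (GOO In) Om Om + bil (GOv m l chi) Om v + / 2 * bil (Gvv m M) v v.

Definition ell (In : vec) (m M l g : R) (chi : vec)
    (Om v Ga : vec) (h : R) : R :=
  Kin In m M l chi Om v - g * m * l * dot chi Ga - g * (m + M) * h.

(* controlled kinetic energy; Ginv is the inverse of (G_ab) *)
Definition Kc (In : vec) (m M l : R) (chi : vec)
    (tau sigma rho Ginv : mat) (Om v : vec) : R :=
  let tO := mv tau Om in
  let w : vec := fun a =>
    v a + sum3 (fun al => (sum3 (fun c => Ginv a c * GvO m l chi c al) + tau a al) * Om al) in
  Kin In m M l chi Om (fun a => v a + tO a)
  + / 2 * bil sigma tO tO
  + / 2 * bil (fun a b => rho a b - Gvv m M a b) w w.

Definition ellc (In : vec) (m M l g : R) (chi : vec)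
    (tau sigma rho Ginv : mat) (Om v Ga : vec) : R :=
  Kc In m M l chi tau sigma rho Ginv Om v - g * m * l * dot chi Ga.

Definition grad4_O (f : vec -> vec -> vec -> R -> R) (gf : vec -> vec -> vec -> R -> vec) :=
  forall Om v Ga h a, derivable_pt_lim (fun s => f (upd Om a s) v Ga h) (Om a) (gf Om v Ga h a).
Definition grad4_v (f : vec -> vec -> vec -> R -> R) (gf : vec -> vec -> vec -> R -> vec) :=
  forall Om v Ga h a, derivable_pt_lim (fun s => f Om (upd v a s) Ga h) (v a) (gf Om v Ga h a).
Definition grad4_G (f : vec -> vec -> vec -> R -> R) (gf : vec -> vec -> vec -> R -> vec) :=
  forall Om v Ga h a, derivable_pt_lim (fun s => f Om v (upd Ga a s) h) (Ga a) (gf Om v Ga h a).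
Definition grad4_h (f : vec -> vec -> vec -> R -> R) (gf : vec -> vec -> vec -> R -> R) :=
  forall Om v Ga h, derivable_pt_lim (fun s => f Om v Ga s) h (gf Om v Ga h).

Definition grad3_O (f : vec -> vec -> vec -> R) (gf : vec -> vec -> vec -> vec) :=
  forall Om v Ga a, derivable_pt_lim (fun s => f (upd Om a s) v Ga) (Om a) (gf Om v Ga a).
Definition grad3_v (f : vec -> vec -> vec -> R) (gf : vec -> vec -> vec -> vec) :=
  forall Om v Ga a, derivable_pt_lim (fun s => f Om (upd v a s) Ga) (v a) (gf Om v Ga a).
Definition grad3_G (f : vec -> vec -> vec -> R) (gf : vec -> vec -> vec -> vec) :=
  forall Om v Ga a, derivable_pt_lim (fun s => f Om v (upd Ga a s)) (Ga a) (gf Om v Ga a).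

Definition has_deriv3 (f f' : R -> vec) : Prop :=
  forall t a, derivable_pt_lim (fun s => f s a) t (f' t a).

Definition C1curve (f : R -> vec) : Prop :=
  exists f', has_deriv3 f f' /\ forall a, continuity (fun t => f' t a).

Definition is_inv (A B : mat) : Prop :=
  (forall a b, mm A B a b = delta a b) /\ (forall a b, mm B A a b = delta a b).

Definition controlled_eqs
    (dlO dlv dlG : vec -> vec -> vec -> R -> vec) (dlh : vec -> vec -> vec -> R -> R)
    (dcv : vec -> vec -> vec -> vec) (mbar g : R)
    (Om v Ga : R -> vec) (h : R -> R) : Prop :=
  let LO t := dlO (Om t) (v t) (Ga t) (h t) in
  let Lv t := dlv (Om t) (v t) (Ga t) (h t) in
  let LG t := dlG (Om t) (v t) (Ga t) (h t) in
  let Lh t := dlh (Om t) (v t) (Ga t) (h t) in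
  let D t : vec := fun a => Lv t a - dcv (Om t) (v t) (Ga t) a in
  (exists dLO, has_deriv3 LO dLO /\
     forall t a, dLO t a = cross (LO t) (Om t) a + cross (Lv t) (v t) a
                           + cross (LG t) (Ga t) a)
  /\ (exists dLv dD, has_deriv3 Lv dLv /\ has_deriv3 D dD /\
     forall t a, dLv t a = cross (Lv t) (Om t) a + Lh t * Ga t a
        + (dD t a - cross (D t) (Om t) a + mbar * g * Ga t a))
  /\ has_deriv3 Ga (fun t => cross (Ga t) (Om t)).

Definition free_eqs (dcO dcv dcG : vec -> vec -> vec -> vec)
    (Om v Ga : R -> vec) : Prop :=
  let CO t := dcO (Om t) (v t) (Ga t) in
  let Cv t := dcv (Om t) (v t) (Ga t) in
  let CG t := dcG (Om t) (v t) (Ga t) in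
  (exists dCO, has_deriv3 CO dCO /\
     forall t a, dCO t a = cross (CO t) (Om t) a + cross (Cv t) (v t) a
                           + cross (CG t) (Ga t) a)
  /\ (exists dCv, has_deriv3 Cv dCv /\
     forall t a, dCv t a = cross (Cv t) (Om t) a)
  /\ has_deriv3 Ga (fun t => cross (Ga t) (Om t)).

(* Main.v *)
Require Import Defs.
From Stdlib Require Import Reals Lra FunctionalExtensionality.
Open Scope R_scope.

Lemma Kc_id In m M l chi k (Hm: m+M<>0) (Hk: m+M+k<>0) (Hk0: k<>0) Om v :
 Kc In m M l chi
   (fun a al => sum3 (fun b => (delta a b / (m+M+k) - delta a b / (m+M)) * GvO m l chi b al))
   (fun a b => delta a b / (/(m+M) - /(m+M+k)))
   (fun a b => (m+M+k) * delta a b)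
   (fun a b => delta a b / (m+M)) Om v
 = Kin In m M l chi Om v + /2 * k * dot v v.
Proof.
unfold Kc, Kin, bil, mv, sum3, delta, eqI3, hat, cross, ebas, GOv, GvO, Gvv, GOO, dot, delta, eqI3.
unfold hat, cross, ebas, delta, eqI3. cbv beta iota. unfold sum3. field. repeat split; auto.
intro H. apply Hk0. field_simplify_eq in H; auto.
Qed.

Lemma ellc_eq In m M l g chi k (Hm: m+M<>0) (Hk: m+M+k<>0) (Hk0: k<>0) Om v Ga h :
 ellc In m M l g chi
   (fun a al => sum3 (fun b => (delta a b / (m+M+k) - delta a b / (m+M)) * GvO m l chi b al))
   (fun a b => delta a b / (/(m+M) - /(m+M+k)))
   (fun a b => (m+M+k) * delta a b)
   (fun a b => delta a b / (m+M)) Om v Ga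
 = ell In m M l g chi Om v Ga h + (g * (m+M) * h + /2 * k * dot v v).
Proof. unfold ellc, ell. rewrite Kc_id; auto. ring. Qed.

Lemma dpl_ext f g x l : (forall s, f s = g s) -> derivable_pt_lim g x l -> derivable_pt_lim f x l.
Proof. intros E D. replace f with g; auto. apply functional_extensionality; intro; auto. Qed.

Lemma dpl_shift f g C x l lc : (forall s, f s = g s + C s) -> derivable_pt_lim g x l ->
  derivable_pt_lim C x lc -> derivable_pt_lim f x (l + lc).
Proof. intros E D1 D2. apply dpl_ext with (g + C)%F. intro s; unfold plus_fct; auto.
apply derivable_pt_lim_plus; auto. Qed.

Lemma dpl_cst C x : derivable_pt_lim (fun _ => C) x 0.
Proof. apply derivable_pt_lim_const. Qed.

Lemma dpl_l f x l l' : derivable_pt_lim f x l -> l = l' -> derivable_pt_lim f x l'.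
Proof. intros; subst; auto. Qed.

Lemma dpl_lin A C x : derivable_pt_lim (fun s => A * s + C) x A.
Proof. apply dpl_l with (A * 1 + 0); [|ring]. apply dpl_shift with (fun s => A * s) (fun _ => C).
 intro; auto. apply (derivable_pt_lim_scal id A x 1). apply derivable_pt_lim_id. apply dpl_cst. Qed.

Lemma dpl_quad A C x : derivable_pt_lim (fun s => A * (s * s) + C) x (2 * A * x).
Proof. apply dpl_l with (A * (1 * id x + id x * 1) + 0); [|unfold id; ring].
 apply dpl_shift with (fun s => A * (s * s)) (fun _ => C). intro; auto.
 apply (derivable_pt_lim_scal (id * id)%F A x). apply derivable_pt_lim_mult; apply derivable_pt_lim_id.
 apply dpl_cst. Qed.

Lemma dot_upd_deriv v a k :
  derivable_pt_lim (fun s => /2 * k * dot (upd v a s) (upd v a s)) (v a) (k * v a).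
Proof.
apply dpl_l with (2 * (/2 * k) * v a); [|field].
destruct a.
- apply dpl_ext with (fun s => (/2*k) * (s*s) + /2*k*(v i2 * v i2 + v i3 * v i3)).
  intro s; unfold dot, sum3, upd; simpl; ring. apply dpl_quad.
- apply dpl_ext with (fun s => (/2*k) * (s*s) + /2*k*(v i1 * v i1 + v i3 * v i3)).
  intro s; unfold dot, sum3, upd; simpl; ring. apply dpl_quad.
- apply dpl_ext with (fun s => (/2*k) * (s*s) + /2*k*(v i1 * v i1 + v i2 * v i2)).
  intro s; unfold dot, sum3, upd; simpl; ring. apply dpl_quad.
Qed.

Lemma mmR X s : (forall a b, mm X (fun a b => s * delta a b) a b = delta a b) ->
  forall a b, X a b * s = delta a b.
Proof. intros H a b; rewrite <- H; destruct a, b; unfold mm, sum3, delta; simpl; ring. Qed.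

Lemma mmL Y s : (forall a b, mm (fun a b => s * delta a b) Y a b = delta a b) ->
  forall a b, s * Y a b = delta a b.
Proof. intros H a b; rewrite <- H; destruct a, b; unfold mm, sum3, delta; simpl; ring. Qed.

Theorem mainTheorem1
  (In : vec) (m M l g : R) (chi : vec)
  (rho rhoinv sigma sigmainv tau Ginv : mat) (k : R)
  (dlO dlv dlG : vec -> vec -> vec -> R -> vec) (dlh : vec -> vec -> vec -> R -> R)
  (dcO dcv dcG : vec -> vec -> vec -> vec)
  (Om v Ga : R -> vec) (h : R -> R) :
  (forall a, 0 < In a) -> 0 < m -> 0 < M -> 0 < l -> 0 < g ->
  dot chi chi = 1 ->
  is_inv Ginv (Gvv m M) ->
  is_inv rhoinv rho ->
  is_inv sigmainv sigma ->
  (* MC1 *) (forall a b, rho a b - Gvv m M a b = k * delta a b) ->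
  (* MC2 *) (forall a al, tau a al =
                sum3 (fun b => (rhoinv a b - Ginv a b) * GvO m l chi b al)) ->
  (* MC3 *) (forall a b, sigmainv a b = Ginv a b - rhoinv a b) ->
  grad4_O (ell In m M l g chi) dlO ->
  grad4_v (ell In m M l g chi) dlv ->
  grad4_G (ell In m M l g chi) dlG ->
  grad4_h (ell In m M l g chi) dlh ->
  grad3_O (ellc In m M l g chi tau sigma rho Ginv) dcO ->
  grad3_v (ellc In m M l g chi tau sigma rho Ginv) dcv ->
  grad3_G (ellc In m M l g chi tau sigma rho Ginv) dcG ->
  C1curve Om -> C1curve v -> C1curve Ga ->
  (controlled_eqs dlO dlv dlG dlh dcv (m + M) g Om v Ga h <->
   free_eqs dcO dcv dcG Om v Ga).
Proof.
intros HIn Hm0 HM0 Hl0 Hg0 Hchi [HG1 _] [Hr1 _] [Hs1 _] MC1 MC2 MC3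
  HlO Hlv HlG Hlh HcO Hcv HcG _ [v' [Hv' _]] _.
assert (Hm : m + M <> 0) by lra.
assert (EG : Ginv = fun a b => delta a b / (m+M)).
{ apply functional_extensionality; intro a; apply functional_extensionality; intro b.
  pose proof (mmR Ginv (m+M) HG1 a b) as E. rewrite <- E. field; auto. }
subst Ginv.
assert (Er : rho = fun a b => (m+M+k) * delta a b).
{ apply functional_extensionality; intro a; apply functional_extensionality; intro b.
  specialize (MC1 a b). unfold Gvv in MC1. lra. }
subst rho.
pose proof (mmR rhoinv (m+M+k) Hr1) as Hr.
assert (Hk : m+M+k <> 0).
{ intro E. specialize (Hr i1 i1). rewrite E in Hr. unfold delta in Hr; simpl in Hr. lra. }
assert (Eri : rhoinv = fun a b => delta a b / (m+M+k)).
{ apply functional_extensionality; intro a; apply functional_extensionality; intro b.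
  rewrite <- (Hr a b). field; auto. }
subst rhoinv.
assert (Esi : sigmainv = fun a b => (/(m+M) - /(m+M+k)) * delta a b).
{ apply functional_extensionality; intro a; apply functional_extensionality; intro b.
  rewrite MC3. field; auto. }
subst sigmainv.
pose proof (mmL sigma _ Hs1) as Hs.
assert (Hc : /(m+M) - /(m+M+k) <> 0).
{ intro E. specialize (Hs i1 i1). rewrite E in Hs. unfold delta in Hs; simpl in Hs. lra. }
assert (Hk0 : k <> 0).
{ intro E. apply Hc. rewrite E, Rplus_0_r. ring. }
assert (Es : sigma = fun a b => delta a b / (/(m+M) - /(m+M+k))).
{ apply functional_extensionality; intro a; apply functional_extensionality; intro b.
  rewrite <- (Hs a b). field; repeat split; auto; intro; apply Hk0; lra. }
subst sigma.
assert (Et : tau = fun a al => sum3 (fun b => (delta a b / (m+M+k) - delta a b / (m+M)) * GvO m l chi b al)).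
{ apply functional_extensionality; intro a; apply functional_extensionality; intro b.
  apply MC2. }
subst tau.
assert (EO : dlO = fun Om v Ga _ => dcO Om v Ga).
{ do 4 (apply functional_extensionality; intro). apply functional_extensionality; intro a.
  symmetry. eapply uniqueness_limite. apply HcO.
  replace (dlO x x0 x1 x2 a) with (dlO x x0 x1 x2 a + 0) by ring.
  eapply dpl_shift. intro s. apply (ellc_eq _ _ _ _ _ _ k Hm Hk Hk0 _ _ _ x2).
  apply HlO. apply dpl_cst. }
subst dlO.
assert (EGa : dlG = fun Om v Ga _ => dcG Om v Ga).
{ do 4 (apply functional_extensionality; intro). apply functional_extensionality; intro a.
  symmetry. eapply uniqueness_limite. apply HcG.
  replace (dlG x x0 x1 x2 a) with (dlG x x0 x1 x2 a + 0) by ring.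
  eapply dpl_shift. intro s. apply (ellc_eq _ _ _ _ _ _ k Hm Hk Hk0 _ _ _ x2).
  apply HlG. apply dpl_cst. }
subst dlG.
assert (Ev : dlv = fun Om v Ga _ a => dcv Om v Ga a - k * v a).
{ do 4 (apply functional_extensionality; intro). apply functional_extensionality; intro a.
  assert (dcv x x0 x1 a = dlv x x0 x1 x2 a + (0 + k * x0 a)).
  { eapply uniqueness_limite. apply Hcv.
    eapply dpl_shift. intro s. apply (ellc_eq _ _ _ _ _ _ k Hm Hk Hk0 _ _ _ x2).
    apply Hlv. apply dpl_shift with (fun _ => g * (m+M) * x2) (fun s => /2 * k * dot (upd x0 a s) (upd x0 a s)).
    intro; auto. apply dpl_cst. apply dot_upd_deriv. }
  lra. }
subst dlv.
assert (Eh : dlh = fun _ _ _ _ => - (g * (m+M))).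
{ do 4 (apply functional_extensionality; intro).
  eapply uniqueness_limite. apply Hlh.
  apply dpl_ext with (fun s => -(g*(m+M)) * s + (Kin In m M l chi x x0 - g*m*l*dot chi x1)).
  intro s; unfold ell; ring. apply dpl_lin. }
subst dlh.
unfold controlled_eqs, free_eqs; cbv beta zeta.
split.
- intros [[dLO [HdLO EqO]] [[dLv [dD [HdLv [HdD EqV]]]] HGa]].
  split; [|split; [|exact HGa]].
  + exists dLO; split; auto. intros t a; rewrite EqO; destruct a; simpl; ring.
  + exists (fun t a => dLv t a - dD t a). split.
    * intros t a. eapply dpl_ext; [| apply (derivable_pt_lim_minus _ _ _ _ _ (HdLv t a) (HdD t a))].
      intro s; unfold minus_fct; ring.
    * intros t a; rewrite EqV; destruct a; simpl; ring.
- intros [[dCO [HdCO EqO]] [[dCv [HdCv EqV]] HGa]].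
  split; [|split; [|exact HGa]].
  + exists dCO; split; auto. intros t a; rewrite EqO; destruct a; simpl; ring.
  + exists (fun t a => dCv t a - k * v' t a), (fun t a => - k * v' t a). split; [|split].
    * intros t a. eapply dpl_ext;
        [| apply (derivable_pt_lim_minus _ _ _ _ _ (HdCv t a) (derivable_pt_lim_scal _ k _ _ (Hv' t a)))].
      intro s; unfold minus_fct, mult_real_fct; ring.
    * intros t a. eapply dpl_ext;
        [| apply (derivable_pt_lim_scal _ (-k) _ _ (Hv' t a))].
      intro s; unfold mult_real_fct; ring.
    * intros t a; rewrite EqV; destruct a; simpl; ring.
Qed.
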